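(* Let $L$ be a finite lattice. Then $\mathsf{C}(L)=\mathsf{Pol}_{0,1}(L)$ if and only if the only tolerances on $L$ are $\mathrm{id}_L$ and $L^2$.
   Context: $L$ has bounds $0,1$; $\mathrm{id}_L=\{(x,x):x\in L\}$. An $n$-ary aggregation function on $L$ ($n\ge1$) is a map $A:L^n\to L$, nondecreasing with respect to the componentwise order, with $A(0,\dots,0)=0$ and $A(1,\dots,1)=1$; $\mathsf{C}(L)$ is the set of all aggregation functions on $L$. Polynomials on $L$ are functions $L^n\to L$ obtained from projections and constant functions by finitely many pointwise joins and meets; $\mathsf{Pol}_{0,1}(L)$ is the set of polynomials $p$ with $p(0,\dots,0)=0$ and $p(1,\dots,1)=1$. A tolerance on $L$ is a reflexive, symmetric binary relation $T$ on $L$ such that $(a,b),(c,d)\in T$ imply $(a\vee c,b\vee d)\in T$ and $(a\wedge c,b\wedge d)\in T$. *)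

(* Defs.v *)
From HB Require Import structures.
From mathcomp Require Import all_boot all_order.
Set Implicit Arguments. Unset Strict Implicit. Unset Printing Implicit Defensive.
Import Order.TTheory.
Local Open Scope order_scope.

Section Defs.
Context {disp : Order.disp_t} {L : finTBLatticeType disp}.

Definition is_aggregation (n : nat) (A : ('I_n -> L) -> L) : Prop :=
  (forall x y : 'I_n -> L, (forall i, x i <= y i) -> A x <= A y) /\
  A (fun _ => \bot) = \bot /\ A (fun _ => \top) = \top.

Inductive polyterm (n : nat) : Type :=
| PVar of 'I_n
| PConst of L
| PJoin of polyterm n & polyterm n
| PMeet of polyterm n & polyterm n.

Fixpoint peval (n : nat) (t : polyterm n) (x : 'I_n -> L) : L :=
  match t with
  | PVar i => x i
  | PConst c => c
  | PJoin p q => peval p x `|` peval q x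
  | PMeet p q => peval p x `&` peval q x
  end.

Definition is_polynomial (n : nat) (f : ('I_n -> L) -> L) : Prop :=
  exists t : polyterm n, forall x, f x = peval t x.

Definition in_Pol01 (n : nat) (f : ('I_n -> L) -> L) : Prop :=
  is_polynomial f /\ f (fun _ => \bot) = \bot /\ f (fun _ => \top) = \top.

Definition is_tolerance (T : L -> L -> Prop) : Prop :=
  (forall x, T x x) /\ (forall x y, T x y -> T y x) /\
  (forall a b c d, T a b -> T c d -> T (a `|` c) (b `|` d)) /\
  (forall a b c d, T a b -> T c d -> T (a `&` c) (b `&` d)).

End Defs.

(* Main.v *)
Require Import Defs.
From HB Require Import structures.
From mathcomp Require Import all_boot all_order.
From Stdlib Require Import Classical.
Set Implicit Arguments. Unset Strict Implicit. Unset Printing Implicit Defensive.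
Import Order.TTheory.
Local Open Scope order_scope.

Section Aux.
Context {disp : Order.disp_t} {L : finTBLatticeType disp}.

Inductive upoly : (L -> L) -> Prop :=
| UId : upoly (fun z => z)
| UConst (c : L) : upoly (fun _ => c)
| UJoin p q : upoly p -> upoly q -> upoly (fun z => p z `|` q z)
| UMeet p q : upoly p -> upoly q -> upoly (fun z => p z `&` q z).

Lemma upoly_mono p : upoly p -> forall x y, x <= y -> p x <= p y.
Proof.
elim=> [|c|p1 q1 _ H1 _ H2|p1 q1 _ H1 _ H2] x y xy //=.
- by apply: leU2; auto.
- by apply: leI2; auto.
Qed.

Lemma upoly_compI p a : upoly p -> upoly (fun z => p (z `&` a)).
Proof.
elim=> [|c|p1 q1 _ H1 _ H2|p1 q1 _ H1 _ H2].
- exact: (UMeet UId (UConst a)).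
- exact: UConst.
- exact: UJoin H1 H2.
- exact: UMeet H1 H2.
Qed.

Lemma upoly_term n (i : 'I_n) p : upoly p ->
  exists t : @polyterm _ L n, forall x, peval t x = p (x i).
Proof.
elim=> [|c|p1 q1 _ [t1 H1] _ [t2 H2]|p1 q1 _ [t1 H1] _ [t2 H2]].
- by exists (PVar i).
- by exists (PConst _ c).
- by exists (PJoin t1 t2) => x /=; rewrite H1 H2.
- by exists (PMeet t1 t2) => x /=; rewrite H1 H2.
Qed.

Lemma peval_mono n (t : @polyterm _ L n) x y : (forall i, x i <= y i) ->
  peval t x <= peval t y.
Proof.
move=> H; elim: t => //= [p Hp q Hq|p Hp q Hq].
- exact: leU2.
- exact: leI2.
Qed.

Lemma peval_tol (T : L -> L -> Prop) n (t : @polyterm _ L n) x y :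
  is_tolerance T -> (forall i, T (x i) (y i)) -> T (peval t x) (peval t y).
Proof.
move=> [Tr [Ts [TJ TM]]] H; elim: t => //= [p Hp q Hq|p Hp q Hq].
- exact: TJ.
- exact: TM.
Qed.

Definition Tcd (c d x y : L) : Prop :=
  exists p, upoly p /\ p c <= x `&` y /\ x `|` y <= p d.

Lemma Tcd_tol c d : is_tolerance (Tcd c d).
Proof.
split; [|split; [|split]].
- move=> x; exists (fun _ => x); split; first exact: UConst.
  by rewrite meetxx joinxx.
- move=> x y [p [Hp [H1 H2]]]; exists p; by rewrite meetC joinC.
- move=> a b c' d' [p [Hp [H1 H2]]] [q [Hq [H3 H4]]].
  exists (fun z => p z `|` q z); split; first exact: UJoin.
  split.
  + rewrite leUx; apply/andP; split.
    * apply: (le_trans H1); apply: leI2; exact: leUl.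
    * apply: (le_trans H3); apply: leI2; exact: leUr.
  + rewrite leUx; apply/andP; split.
    * apply: le_trans _ (leU2 H2 H4); apply: leU2; exact: leUl.
    * apply: le_trans _ (leU2 H2 H4); apply: leU2; exact: leUr.
- move=> a b c' d' [p [Hp [H1 H2]]] [q [Hq [H3 H4]]].
  exists (fun z => p z `&` q z); split; first exact: UMeet.
  split.
  + apply: le_trans (leI2 H1 H3) _.
    rewrite lexI; apply/andP; split; apply: leI2; (exact: leIl || exact: leIr).
  + apply: le_trans _ (leI2 H2 H4).
    rewrite leUx; apply/andP; split; apply: leI2; (exact: leUl || exact: leUr).
Qed.

Hypothesis TS : forall T : L -> L -> Prop, is_tolerance T ->
      (forall x y, T x y <-> x = y) \/ (forall x y, T x y).

Lemma sep a b : ~~ (a <= b) -> exists q, upoly q /\ q a = \top /\ q b = \bot.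
Proof.
move=> nab.
have cd : a `&` b != a.
  by apply: contra nab => /eqP <-; exact: leIr.
case: (TS (Tcd_tol (a `&` b) a)) => [Hid|Hfull].
- exfalso; move/eqP: cd; apply; apply/Hid.
  exists (fun z => z); split; first exact: UId.
  by split; [rewrite lexI lexx leIl|rewrite leUx leIl lexx].
- have [p [Hp [H1 H2]]] := Hfull \bot \top.
  exists (fun z => p (z `&` a)); split; first exact: upoly_compI.
  rewrite meetxx meetC; split.
  + by apply/eqP; rewrite eq_le lex1; rewrite joinx1 in H2.
  + by apply/eqP; rewrite eq_le le0x andbT; rewrite meetx1 in H1.
Qed.

Lemma ua a : exists u, upoly u /\ forall z,
  (a <= z -> u z = \top) /\ (~~ (a <= z) -> u z = \bot).
Proof.
suff [u [Hu H]] : exists u, upoly u /\ forall z,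
  (a <= z -> u z = \top) /\ (z \in enum L -> ~~ (a <= z) -> u z = \bot).
  exists u; split=> // z; have [H1 H2] := H z; split=> //; apply: H2.
  by rewrite mem_enum.
elim: (enum L) => [|b s [u [Hu H]]].
- by exists (fun _ => \top); split; [exact: UConst|].
- case: (boolP (a <= b)) => ab.
  + exists u; split=> // z; have [H1 H2] := H z; split=> // zin nz.
    move: zin; rewrite in_cons => /orP [/eqP ez|zs]; last exact: H2 zs nz.
    by rewrite ez ab in nz.
  + have [q [Hq [qa qb]]] := sep ab.
    exists (fun z => u z `&` q z); split; first exact: UMeet.
    move=> z; have [H1 H2] := H z; split.
    * move=> az; rewrite H1 //; apply/eqP; rewrite eq_le lex1 /= meet1x.
      by rewrite -qa; apply: upoly_mono.
    * move=> zin nz; move: zin; rewrite in_cons => /orP [/eqP ez|zin].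
      - by rewrite ez qb meetx0.
      - by rewrite H2 // meet0x.
Qed.

Lemma Mterm n (a : 'I_n -> L) : exists t : @polyterm _ L n, forall x,
  ((forall i, a i <= x i) -> peval t x = \top) /\
  ((exists i, ~~ (a i <= x i)) -> peval t x = \bot).
Proof.
suff [t H] : exists t : @polyterm _ L n, forall x,
  ((forall i, a i <= x i) -> peval t x = \top) /\
  ((exists2 i, i \in enum 'I_n & ~~ (a i <= x i)) -> peval t x = \bot).
  exists t => x; have [H1 H2] := H x; split=> // [[i Hi]]; apply: H2.
  by exists i; rewrite ?mem_enum.
elim: (enum 'I_n) => [|i s [t H]].
- by exists (PConst _ \top) => x; split=> // [[i]].
- have [u [Hu Hu2]] := ua (a i).
  have [ti Hti] := upoly_term i Hu.
  exists (PMeet ti t) => x /=; have [H1 H2] := H x; rewrite Hti; split.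
  + move=> all; rewrite H1 // meetx1; have [Hu3 _] := Hu2 (x i); by rewrite Hu3 ?all.
  + move=> [j]; rewrite in_cons => /orP [/eqP ->|js] nj.
    * by have [_ ->] := Hu2 (x i); rewrite ?meet0x.
    * by rewrite H2 ?meetx0 //; exists j.
Qed.

Lemma agg_poly n (f : ('I_n -> L) -> L) : is_aggregation f -> is_polynomial f.
Proof.
move=> [mono _].
suff [t [H1 H2]] : exists t : @polyterm _ L n, (forall x, peval t x <= f x) /\
  (forall x (a : {ffun 'I_n -> L}), a \in enum {ffun 'I_n -> L} ->
     (forall i, a i = x i) -> f x <= peval t x).
  exists t => x; apply/eqP; rewrite eq_le H1 andbT.
  apply: (H2 x [ffun i => x i]); first by rewrite mem_enum.
  by move=> i; rewrite ffunE.
elim: (enum _) => [|a s [t [H1 H2]]].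
- by exists (PConst _ \bot); split=> [x|x a]; [exact: le0x|rewrite in_nil].
- have [m Hm] := Mterm (fun i => a i).
  exists (PJoin (PMeet (PConst _ (f (fun i => a i))) m) t); split.
  + move=> x /=; rewrite leUx H1 andbT.
    case: (boolP [forall i, a i <= x i]) => [/forallP all|].
    * apply: le_trans (leIl _ _) _; exact: mono.
    * rewrite negb_forall => /existsP [i Hi].
      have [_ Hm2] := Hm x; rewrite Hm2; [by rewrite meetx0 le0x|by exists i].
  + move=> x b; rewrite in_cons => /orP [/eqP -> Hb|bs Hb] /=.
    * have [Hm1 _] := Hm x; rewrite Hm1; last by move=> i; rewrite Hb.
      rewrite meetx1; apply: le_trans (leUl _ _).
      by apply: mono => i; rewrite Hb.
    * apply: le_trans (leUr _ _); exact: (H2 x b).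
Qed.

End Aux.

Lemma main_aux (disp : Order.disp_t) (L : finTBLatticeType disp) :
  (forall (n : nat), (0 < n)%N -> forall f : ('I_n -> L) -> L,
      is_aggregation f <-> in_Pol01 f)
  <->
  (forall T : L -> L -> Prop, is_tolerance T ->
      (forall x y, T x y <-> x = y) \/ (forall x y, T x y)).
Proof.
split.
- move=> H T tolT.
  have [Tr [Ts [TJ TM]]] := tolT.
  case: (classic (forall x y, T x y -> x = y)) => [Hid|Hn].
    by left=> x y; split; [exact: Hid|move=> ->].
  right.
  have [c [d [Tcd' ndc]]] : exists c d, T c d /\ ~~ (d <= c).
    apply: NNPP => Hno; apply: Hn => a b Tab.
    apply/eqP; rewrite eq_le; apply/andP; split.
    + apply: negbNE; apply/negP => nab; apply: Hno.
      by exists b, a; split; [exact: Ts|exact: nab].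
    + apply: negbNE; apply/negP => nab; apply: Hno.
      by exists a, b; split; [|exact: nab].
  pose f := fun x : 'I_1 -> L => if d <= x ord0 then \top else \bot : L.
  have aggf : is_aggregation f.
    split; [|split].
    + move=> x y xy; rewrite /f; case: ifP => dx; last exact: le0x.
      by rewrite (le_trans dx (xy ord0)).
    + rewrite /f; case: ifP => // db; exfalso; move/negP: ndc; apply.
      exact: le_trans db (le0x _).
    + by rewrite /f lex1.
  have [[t Ht] _] := (H 1 isT f).1 aggf.
  have Tbt : T \bot \top.
    have := peval_tol t (x := fun _ => c) (y := fun _ => d) tolT (fun _ => Tcd').
    by rewrite -!Ht /f lexx (negbTE ndc).
  have Tb x : T x x -> T \bot x.
    by move=> _; have := TM _ _ _ _ Tbt (Tr x); rewrite meet0x meet1x.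
  move=> x y.
  have h1 : T x (x `|` y) by have := TJ _ _ _ _ (Tr x) (Tb y (Tr y)); rewrite joinx0.
  have h2 : T (x `|` y) y.
    by apply: Ts; have := TJ _ _ _ _ (Tr y) (Tb x (Tr x)); rewrite joinx0 joinC.
  have := TM _ _ _ _ h1 h2.
  by rewrite joinKI joinIK.
- move=> TS n _ f; split.
  + move=> Ha; split; first exact: (@agg_poly _ _ TS n f Ha).
    by case: Ha => _ [].
  + move=> [[t Ht] [H0 H1]]; split=> //.
    by move=> x y xy; rewrite !Ht; exact: peval_mono.
Qed.

Local Close Scope order_scope.

Theorem mainTheorem5 (disp : Order.disp_t) (L : finTBLatticeType disp) :
  (forall (n : nat), 0 < n -> forall f : ('I_n -> L) -> L,
      is_aggregation f <-> in_Pol01 f)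
  <->
  (forall T : L -> L -> Prop, is_tolerance T ->
      (forall x y, T x y <-> x = y) \/ (forall x y, T x y)).
Proof. exact: main_aux. Qed.
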